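(* Let $\mathcal{Y}$ be a finite set, let $\mathbb{P}_t$, $p_t$, $q_t$ be probability distributions on $\mathcal{Y}$, let $z \in \mathcal{Y}$ with $p_t(z) > 0$, and let $\alpha, \eta \in \mathbb{R}$. Let $\ell$ be the 0-1 loss $\ell(y, p) = \mathbb{I}\{y \neq \arg\max_{y'} p(y')\}$ (with a fixed tie-breaking rule for the argmax). For $r \in \{0,1\}$ define $$L(r) = \mathbb{E}_{y \sim \mathbb{P}_t}\Big[ r \cdot \big(\ell(y, p_t) + \alpha \cdot D_{\mathrm{TV}}(p_t, q_t)\big) + (1 - r) \cdot \Big(\ell(y, q_t) + \eta \cdot \frac{q_t(z)}{p_t(z)}\Big)\Big].$$ Define $\hat r \in \{0,1\}$ by $\hat r = 1$ if and only if $$\max_{y} q_t(y) < \max_{y} p_t(y) - \alpha \cdot D_{\mathrm{TV}}(p_t, q_t) + \eta \cdot \frac{q_t(z)}{p_t(z)}.$$ Then $$L(\hat r) - \min_{r \in \{0,1\}} L(r) \le \max_{y \in \mathcal{Y}} |\mathbb{P}_t(y) - q_t(y)| + \max_{y \in \mathcal{Y}} |\mathbb{P}_t(y) - p_t(y)|.$$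
   Context: $D_{\mathrm{TV}}(p,q) = \frac{1}{2}\sum_{y \in \mathcal{Y}} |p(y) - q(y)|$ is the total variation distance. Interpretation (not needed formally): $\mathcal{Y}$ is a token vocabulary, $q_t$ and $p_t$ are the next-token distributions of a draft model and a reference (verifier) model given a fixed prefix $x_{<t}$ and retrieved chunk $z$, $\mathbb{P}_t$ is the true next-token distribution, $r$ is the rejection decision, and $\hat r$ is the plug-in confidence-based rejection rule. *)

(* Defs.v *)
From mathcomp Require Import all_boot all_order all_algebra.
Set Implicit Arguments. Unset Strict Implicit. Unset Printing Implicit Defensive.
Import Order.TTheory GRing.Theory Num.Theory.
Local Open Scope ring_scope.

Definition is_distr (R : realFieldType) (Y : finType) (p : Y -> R) : Prop :=
  (forall y, 0 <= p y) /\ \sum_(y : Y) p y = 1.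

Definition dTV (R : realFieldType) (Y : finType) (p q : Y -> R) : R :=
  2^-1 * \sum_(y : Y) `|p y - q y|.

(* Maximum of a nonnegative function over Y (0 for empty Y). *)
Definition fmax (R : realFieldType) (Y : finType) (f : Y -> R) : R :=
  \big[Num.max/0]_(y : Y) f y.

(* An argmax selector (= argmax with some fixed tie-breaking rule). *)
Definition is_argmax_sel (R : realFieldType) (Y : finType)
  (am : (Y -> R) -> Y) : Prop := forall (f : Y -> R) (y : Y), f y <= f (am f).

Definition loss01 (R : realFieldType) (Y : finType) (am : (Y -> R) -> Y)
  (y : Y) (p : Y -> R) : R := if y != am p then 1 else 0.

Definition Lrisk (R : realFieldType) (Y : finType) (am : (Y -> R) -> Y)
  (P p q : Y -> R) (z : Y) (alpha eta : R) (r : bool) : R :=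
  \sum_(y : Y) P y *
    ((r%:R) * (loss01 am y p + alpha * dTV p q)
     + (1 - r%:R) * (loss01 am y q + eta * (q z / p z))).

Definition rhat (R : realFieldType) (Y : finType)
  (p q : Y -> R) (z : Y) (alpha eta : R) : bool :=
  fmax q < fmax p - alpha * dTV p q + eta * (q z / p z).

(* Main.v *)
Require Import Defs.
From mathcomp Require Import all_boot all_order all_algebra.
From mathcomp Require Import lra.
Import Order.TTheory GRing.Theory Num.Theory.
Local Open Scope ring_scope.
Set Implicit Arguments.

Lemma fmax_ge (R : realFieldType) (Y : finType) (f : Y -> R) y : f y <= fmax f.
Proof. by rewrite /fmax (bigD1 y) //= le_max lexx. Qed.

Lemma fmax_le (R : realFieldType) (Y : finType) (f : Y -> R) x :
  0 <= x -> (forall y, f y <= x) -> fmax f <= x.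
Proof.
move=> x0 H; rewrite /fmax; apply: (big_ind (fun v => v <= x)) => //.
by move=> a b ha hb; rewrite ge_max ha hb.
Qed.

Lemma fmax_am (R : realFieldType) (Y : finType) (am : (Y -> R) -> Y) (f : Y -> R) :
  is_argmax_sel am -> (forall y, 0 <= f y) -> fmax f = f (am f).
Proof.
move=> Ham f0; apply/eqP; rewrite eq_le fmax_ge andbT.
by apply: fmax_le => //; apply: Ham.
Qed.

Lemma sum_loss (R : realFieldType) (Y : finType) (am : (Y -> R) -> Y) (P p : Y -> R) k :
  \sum_y P y = 1 ->
  \sum_y P y * (loss01 am y p + k) = 1 - P (am p) + k.
Proof.
move=> HP.
under eq_bigr => y _ do rewrite mulrDr.
rewrite big_split /= -big_distrl /= HP mul1r; congr (_ + _).
rewrite -HP (bigD1 (am p)) //= /loss01 eqxx mulr0 add0r.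
rewrite [X in _ = X - _](bigD1 (am p)) //= [P _ + _]addrC addrK.
by apply: eq_bigr => y /negbTE ->; rewrite mulr1.
Qed.

Lemma arith1 (R : realFieldType) (Pa Pb pa qb D c A B : R) :
  qb < pa - D + c -> Pb - qb <= B -> pa - Pa <= A -> 0 <= A -> 0 <= B ->
  1 - Pa + D - Num.min (1 - Pb + c) (1 - Pa + D) <= B + A.
Proof. by move=> *; case: (lerP (1 - Pb + c) (1 - Pa + D)) => ?; lra. Qed.

Lemma arith2 (R : realFieldType) (Pa Pb pa qb D c A B : R) :
  pa - D + c <= qb -> qb - Pb <= B -> Pa - pa <= A -> 0 <= A -> 0 <= B ->
  1 - Pb + c - Num.min (1 - Pb + c) (1 - Pa + D) <= B + A.
Proof. by move=> *; case: (lerP (1 - Pb + c) (1 - Pa + D)) => ?; lra. Qed.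


Theorem lemma2 (R : realFieldType) (Y : finType) (am : (Y -> R) -> Y)
  (Pt pt qt : Y -> R) (z : Y) (alpha eta : R) :
  is_argmax_sel am ->
  is_distr Pt -> is_distr pt -> is_distr qt ->
  0 < pt z ->
  Lrisk am Pt pt qt z alpha eta (rhat pt qt z alpha eta)
    - Num.min (Lrisk am Pt pt qt z alpha eta false)
              (Lrisk am Pt pt qt z alpha eta true)
  <= fmax (fun y => `|Pt y - qt y|) + fmax (fun y => `|Pt y - pt y|).
Proof.
move=> Ham [P0 P1] [p0 p1] [q0 q1] _.
have L1 : Lrisk am Pt pt qt z alpha eta true = 1 - Pt (am pt) + alpha * dTV pt qt.
  rewrite /Lrisk -(sum_loss am Pt pt _ P1); apply: eq_bigr => y _.
  by rewrite /= mul1r subrr mul0r addr0.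
have L0 : Lrisk am Pt pt qt z alpha eta false = 1 - Pt (am qt) + eta * (qt z / pt z).
  rewrite /Lrisk -(sum_loss am Pt qt _ P1); apply: eq_bigr => y _.
  by rewrite /= mul0r subr0 mul1r add0r.
have Ea := @fmax_ge _ _ (fun y => `|Pt y - pt y|) (am pt).
have Eb := @fmax_ge _ _ (fun y => `|Pt y - qt y|) (am qt).
have Fa := @fmax_ge _ _ (fun y => `|Pt y - pt y|) z.
have Fb := @fmax_ge _ _ (fun y => `|Pt y - qt y|) z.
move: Ea Eb Fa Fb; rewrite /=.
set A := fmax _; set B := fmax _ => Ea Eb Fa Fb.
have Ga := ler_norm (Pt (am pt) - pt (am pt)).
have Ga' := ler_norm (pt (am pt) - Pt (am pt)).
have Gb := ler_norm (Pt (am qt) - qt (am qt)).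
have Gb' := ler_norm (qt (am qt) - Pt (am qt)).
rewrite distrC in Ga'; rewrite distrC in Gb'.
have Na := normr_ge0 (Pt z - pt z).
have Nb := normr_ge0 (Pt z - qt z).
rewrite L0 L1 /rhat (@fmax_am _ _ am pt Ham p0) (@fmax_am _ _ am qt Ham q0).
set D := dTV pt qt; set c := eta * (qt z / pt z).
have hA : pt (am pt) - Pt (am pt) <= A by apply: le_trans Ea.
have hA' : Pt (am pt) - pt (am pt) <= A by apply: le_trans Ea.
have hB : qt (am qt) - Pt (am qt) <= B by apply: le_trans Eb.
have hB' : Pt (am qt) - qt (am qt) <= B by apply: le_trans Eb.
have A0 : 0 <= A by apply: le_trans Fa.
have B0 : 0 <= B by apply: le_trans Fb.
case H: (qt (am qt) < pt (am pt) - alpha * D + c).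
  rewrite L1 -/D. exact: (@arith1 R _ _ _ _ _ _ _ _ H hB' hA A0 B0).
rewrite L0 -/c; move/negbT: H; rewrite -leNgt => H.
rewrite -/D; exact: (@arith2 R _ _ _ _ _ _ _ _ H hB hA' A0 B0).
Qed.
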